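(* Let $n\ge1$, $q$ a prime power, $s\in\mathbb{F}_q$, and let $(\mathsf{Enc},\mathcal{A})$ be an $n$-party one-round aggregation protocol over $\mathbb{F}_q$ with encoder $\mathsf{Enc}:\mathbb{F}_q\to[\ell]^m$. For $\mathbf{x}\in\mathcal{B}_s$ and $\mathbf{y}\in[\ell]^{nm}$ let $p_{\mathbf{x},\mathbf{y}}=\Pr_{Y\sim\mathcal{S}^{\mathsf{Enc}}_{\mathbf{x}}}[Y=\mathbf{y}]$, $p_{\mathbf{y}}=\sum_{\mathbf{x}\in\mathcal{B}_s}p_{\mathbf{x},\mathbf{y}}$, and $d_{\mathbf{y}}=q^{-(2n-2)}\sum_{\mathbf{x}\in\mathcal{B}_s}\sum_{\mathbf{x}'\in\mathcal{B}_s}|p_{\mathbf{x},\mathbf{y}}-p_{\mathbf{x}',\mathbf{y}}|$. Then for every $\mathbf{y}\in[\ell]^{nm}$, $$d_{\mathbf{y}}\ge 2\left(1-\frac{n^{nm}}{q^{n-1}}\right)\frac{p_{\mathbf{y}}}{q^{n-1}}.$$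
   Context: $\mathcal{B}_s=\{\mathbf{x}\in\mathbb{F}_q^n:\sum_ix_i=s\}$. An $n$-party one-round aggregation protocol over $\mathbb{F}_q$ with $m$ messages per party consists of a randomized encoder $\mathsf{Enc}:\mathbb{F}_q\to[\ell]^m$ (for some positive integer $\ell$; each party applies it to its input with independent randomness) and an analyzer $\mathcal{A}:[\ell]^{nm}\to\mathbb{F}_q$ such that for every $\mathbf{x}\in\mathbb{F}_q^n$, every possible realization of the encodings $\mathsf{Enc}(x_1),\dots,\mathsf{Enc}(x_n)$, and every permutation $\pi$ of $[nm]$, the analyzer applied to the concatenation $(\mathsf{Enc}(x_1),\dots,\mathsf{Enc}(x_n))$ with coordinates permuted by $\pi$ outputs $\sum_i x_i$. $\mathcal{S}^{\mathsf{Enc}}_{\mathbf{x}}$ is the distribution on $[\ell]^{nm}$ of this concatenation after applying an independent uniformly random permutation of the $nm$ coordinates. *)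

(* Defs.v *)
From HB Require Import structures.
From mathcomp Require Import all_boot all_order all_algebra.
From mathcomp Require Import fingroup perm.
Set Implicit Arguments. Unset Strict Implicit. Unset Printing Implicit Defensive.
Import Order.TTheory GRing.Theory Num.Theory.
Local Open Scope ring_scope.

(* Positions 0..nm-1 of the concatenated transcript: position j holds the
   (j %% m)-th message of party (j %/ m). *)
Lemma party_of_lt (n m : nat) (j : 'I_(n * m)) : (j %/ m < n)%N.
Proof.
case: m j => [|m] j; first by case: j => /= k; rewrite muln0.
by rewrite ltn_divLR // (ltn_ord j).
Qed.

Lemma msg_of_lt (n m : nat) (j : 'I_(n * m)) : (j %% m < m)%N.
Proof.
case: m j => [|m] j; first by case: j => /= k; rewrite muln0.
by rewrite ltn_pmod.
Qed.

Definition party_of (n m : nat) (j : 'I_(n * m)) : 'I_n := Ordinal (party_of_lt j).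
Definition msg_of (n m : nat) (j : 'I_(n * m)) : 'I_m := Ordinal (msg_of_lt j).

Definition concat_enc (n m l : nat) (e : {ffun 'I_n -> {ffun 'I_m -> 'I_l}})
  : {ffun 'I_(n * m) -> 'I_l} :=
  [ffun j => e (party_of j) (msg_of j)].

Definition permute_coords (N l : nat) (pi : {perm 'I_N}) (w : {ffun 'I_N -> 'I_l})
  : {ffun 'I_N -> 'I_l} := [ffun j => w (pi j)].

Definition is_encoder (R : realFieldType) (F : finFieldType) (m l : nat)
  (Enc : F -> {ffun 'I_m -> 'I_l} -> R) : Prop :=
  forall a : F, (forall o, 0 <= Enc a o) /\ \sum_o Enc a o = 1.

Definition is_aggregation_protocol (R : realFieldType) (F : finFieldType)
  (n m l : nat) (Enc : F -> {ffun 'I_m -> 'I_l} -> R)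
  (A : {ffun 'I_(n * m) -> 'I_l} -> F) : Prop :=
  (0 < l)%N /\ is_encoder Enc /\
  forall (x : {ffun 'I_n -> F}) (e : {ffun 'I_n -> {ffun 'I_m -> 'I_l}}),
    (forall i, 0 < Enc (x i) (e i)) ->
    forall pi : {perm 'I_(n * m)},
      A (permute_coords pi (concat_enc e)) = \sum_i x i.

Definition Bset (F : finFieldType) (n : nat) (s : F) : {set {ffun 'I_n -> F}} :=
  [set x : {ffun 'I_n -> F} | \sum_i x i == s].

(* p_{x,y} = Pr_{Y ~ S^Enc_x}[Y = y]: independent encodings, then a
   uniformly random permutation of the nm coordinates. *)
Definition shuffled_prob (R : realFieldType) (F : finFieldType) (n m l : nat)
  (Enc : F -> {ffun 'I_m -> 'I_l} -> R) (x : {ffun 'I_n -> F})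
  (y : {ffun 'I_(n * m) -> 'I_l}) : R :=
  ((n * m)`!)%:R^-1 *
  \sum_(pi : {perm 'I_(n * m)})
    \sum_(e : {ffun 'I_n -> {ffun 'I_m -> 'I_l}})
      (\prod_i Enc (x i) (e i)) * (permute_coords pi (concat_enc e) == y)%:R.

(* Main.v *)
Require Import Defs.
From HB Require Import structures.
From mathcomp Require Import all_boot all_order all_algebra.
From mathcomp Require Import fingroup perm.
From mathcomp Require Import ring lra zify.
Import Order.TTheory GRing.Theory Num.Theory.
Local Open Scope ring_scope.

Definition wit {R : realFieldType} {F : finFieldType} {n m l : nat}
  (Enc : F -> {ffun 'I_m -> 'I_l} -> R) (y : {ffun 'I_(n * m) -> 'I_l})
  (x : {ffun 'I_n -> F}) (pi : {perm 'I_(n * m)})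
  (e : {ffun 'I_n -> {ffun 'I_m -> 'I_l}}) : bool :=
  (\prod_i Enc (x i) (e i) != 0) && (permute_coords pi (concat_enc e) == y).

Lemma shuffled_ge0 {R : realFieldType} {F : finFieldType} {n m l : nat}
  (Enc : F -> {ffun 'I_m -> 'I_l} -> R) x y :
  is_encoder Enc -> 0 <= @shuffled_prob R F n m l Enc x y.
Proof.
move=> hE; rewrite /shuffled_prob mulr_ge0 ?invr_ge0 ?ler0n //.
apply: sumr_ge0 => pi _; apply: sumr_ge0 => e _.
apply: mulr_ge0; last exact: ler0n.
by apply: prodr_ge0 => i _; case: (hE (x i)).
Qed.

Lemma shuffled_wit {R : realFieldType} {F : finFieldType} {n m l : nat}
  (Enc : F -> {ffun 'I_m -> 'I_l} -> R) x y :
  @shuffled_prob R F n m l Enc x y != 0 -> exists pi e, wit Enc y x pi e.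
Proof.
move=> hp.
case: (boolP [exists pi, exists e, wit Enc y x pi e]) => [/existsP [pi /existsP [e he]] | hno].
  by exists pi, e.
exfalso; move/eqP: hp; apply.
rewrite /shuffled_prob big1 ?mulr0 // => pi _; rewrite big1 // => e _.
move: hno; rewrite negb_exists => /forallP /(_ pi); rewrite negb_exists => /forallP /(_ e).
rewrite /wit negb_and negbK.
by case/orP => [/eqP -> | /negbTE ->]; rewrite ?mul0r ?mulr0.
Qed.

Lemma prod_pos {R : realFieldType} {F : finFieldType} {n m l : nat}
  (Enc : F -> {ffun 'I_m -> 'I_l} -> R) (x : {ffun 'I_n -> F})
  (e : {ffun 'I_n -> {ffun 'I_m -> 'I_l}}) :
  is_encoder Enc -> \prod_i Enc (x i) (e i) != 0 -> forall i, 0 < Enc (x i) (e i).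
Proof.
move=> hE hp i; rewrite lt_def; case: (hE (x i)) => -> _; rewrite andbT.
by apply: contra hp => /eqP h0; rewrite (bigD1 i) //= h0 mul0r.
Qed.

Lemma wit_inj {R : realFieldType} {F : finFieldType} {n m l : nat}
  (Enc : F -> {ffun 'I_m -> 'I_l} -> R) A y x x' pi pi' e e' :
  @is_aggregation_protocol R F n m l Enc A ->
  wit Enc y x pi e -> wit Enc y x' pi' e' ->
  (forall j, @party_of n m (pi j) = @party_of n m (pi' j)) -> x = x'.
Proof.
move=> [_ [hE hA]] /andP[hp hy] /andP[hp' hy'] hg.
have hpos := prod_pos _ _ _ hE hp; have hpos' := prod_pos _ _ _ hE hp'.
have hsum : A y = \sum_i x i by rewrite -(eqP hy); apply: hA.
apply/ffunP => i.
pose e'' := [ffun k => if k == i then e' k else e k].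
pose x'' := [ffun k => if k == i then x' k else x k].
pose f := fun j => if @party_of n m (pi j) == i then pi' j else pi j.
have finj : injective f.
  move=> j1 j2; rewrite /f.
  case: eqP => h1; case: eqP => h2.
  - exact: perm_inj.
  - by move=> E; exfalso; apply: h2; rewrite -E -hg h1.
  - by move=> E; exfalso; apply: h1; rewrite E -hg h2.
  - exact: perm_inj.
pose pi'' := perm finj.
have hy'' : permute_coords pi'' (concat_enc e'') = y.
  apply/ffunP => j; rewrite !ffunE permE /f.
  case hj: (@party_of n m (pi j) == i).
    move/eqP: hj => hj.
    by rewrite -(eqP hy') !ffunE -hg hj eqxx.
  by rewrite -(eqP hy) !ffunE hj.
have hsum'' : A y = \sum_k x'' k.
  rewrite -hy''; apply: hA => k; rewrite !ffunE.
  by case: eqP => _; [apply: hpos' | apply: hpos].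
have : \sum_k x k = \sum_k x'' k by rewrite -hsum -hsum''.
rewrite (bigD1 i) //= [in RHS](bigD1 i) //= ffunE eqxx.
have -> : \sum_(k | k != i) x'' k = \sum_(k | k != i) x k.
  by apply: eq_bigr => k /negbTE hk; rewrite ffunE hk.
by move/addIr.
Qed.

Lemma card_S {R : realFieldType} {F : finFieldType} {n m l : nat}
  (Enc : F -> {ffun 'I_m -> 'I_l} -> R) A y (B : {set {ffun 'I_n -> F}}) :
  @is_aggregation_protocol R F n m l Enc A ->
  (#|[set x in B | shuffled_prob Enc x y != 0%R]| <= n ^ (n * m))%N.
Proof.
move=> hP.
pose h := fun x : {ffun 'I_n -> F} =>
  [ffun j => @party_of n m (odflt 1%g [pick pi | [exists e, wit Enc y x pi e]] j)].
have getw : forall x, x \in [set x in B | shuffled_prob Enc x y != 0] ->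
   exists pi, [pick pi | [exists e, wit Enc y x pi e]] = Some pi /\
      exists e, wit Enc y x pi e.
  move=> x; rewrite inE => /andP[_ /shuffled_wit [pi0 [e0 h0]]].
  case: pickP => [pi /existsP [e he] | hn].
    by exists pi; split => //; exists e.
  by move: (hn pi0) => /existsP; case; exists e0.
rewrite -(card_in_imset (f := h)).
  apply: leq_trans (max_card _) _.
  by rewrite card_ffun !card_ord.
move=> x1 x2 /getw [pi1 [E1 [e1 w1]]] /getw [pi2 [E2 [e2 w2]]].
rewrite /h E1 E2 /= => /ffunP H.
apply: (wit_inj _ _ _ _ _ _ _ _ _ hP w1 w2) => j.
by have := H j; rewrite !ffunE.
Qed.

Lemma card_Bset {F : finFieldType} n (s : F) :
  (1 <= n)%N -> #|Bset n s| = (#|F| ^ (n-1))%N.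
Proof.
case: n => // n _; rewrite subn1 /=.
pose r := fun x : {ffun 'I_n.+1 -> F} => [ffun k : 'I_n => x (lift ord_max k)] : {ffun 'I_n -> F}.
pose h := fun z : {ffun 'I_n -> F} => ([ffun i : 'I_n.+1 =>
   if unlift ord_max i is Some k then z k else s - \sum_k z k] : {ffun 'I_n.+1 -> F}).
have hr : r @: Bset n.+1 s = setT.
  apply/setP => z; rewrite inE; apply/imsetP; exists (h z).
    rewrite /Bset inE (bigD1_ord ord_max) //= ffunE unlift_none.
    have -> : \sum_(i < n) h z (lift ord_max i) = \sum_(i < n) z i.
      by apply: eq_bigr => k _; rewrite ffunE liftK.
    by rewrite subrK.
  by apply/ffunP => k; rewrite !ffunE liftK.
rewrite -(card_in_imset (f:=r)) ?hr ?cardsT ?card_ffun ?card_ord //.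
move=> x1 x2; rewrite /Bset !inE => /eqP h1 /eqP h2 /ffunP hr12.
apply/ffunP => i.
case: (unliftP ord_max i) => [k ->| ->].
  by have := hr12 k; rewrite !ffunE.
move: h1 h2; rewrite !(bigD1_ord ord_max) //=.
have -> : \sum_(k < n) x1 (lift ord_max k) = \sum_(k < n) x2 (lift ord_max k).
  by apply: eq_bigr => k _; have := hr12 k; rewrite !ffunE.
by move=> h1 h2; apply: (@addIr _ (\sum_(k < n) x2 (lift ord_max k))); rewrite h1 h2.
Qed.

Theorem mainTheorem13 (R : realFieldType) (F : finFieldType) (n m l : nat)
  (s : F) (Enc : F -> {ffun 'I_m -> 'I_l} -> R)
  (A : {ffun 'I_(n * m) -> 'I_l} -> F) :
  (1 <= n)%N ->
  is_aggregation_protocol Enc A ->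
  forall y : {ffun 'I_(n * m) -> 'I_l},
    let q : R := (#|F|)%:R in
    let p := fun x => shuffled_prob Enc x y in
    let p_y := \sum_(x in Bset n s) p x in
    let d_y := (q ^+ (2 * n - 2))^-1 *
               \sum_(x in Bset n s) \sum_(x' in Bset n s) `|p x - p x'| in
    2 * (1 - (n ^ (n * m))%:R / q ^+ (n - 1)) * (p_y / q ^+ (n - 1)) <= d_y.
Proof.
intros n1 hP y; cbv zeta.
set q : R := #|F|%:R.
set p := (shuffled_prob Enc)^~ y.
have [l0 [hE hA]] := hP.
set B := Bset n s.
set S := [set x in B | p x != 0].
have SB : S \subset B by apply/subsetP => x; rewrite inE => /andP[].
have p0 : forall x, x \notin S -> x \in B -> p x = 0.
  by move=> x hS hB; apply/eqP; apply: contraNT hS => hp; rewrite inE hB hp.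
have pge0 : forall x, 0 <= p x by move=> x; exact: shuffled_ge0.
have hK : (#|S| <= n ^ (n * m))%N := card_S _ _ _ B hP.
have hc : (#|S| + #|B :\: S|)%N = #|B| by rewrite -(cardsID S B) (setIidPr SB).
have hN : q ^+ (n-1) = (#|S| + #|B :\: S|)%:R.
  by rewrite hc /q -natrX /B card_Bset.
have hpy : \sum_(x in B) p x = \sum_(x in S) p x.
  rewrite (big_setID S) /= (setIidPr SB) [X in _ + X]big1 ?addr0 //.
  by move=> x; rewrite inE => /andP[hS hB]; exact: p0.
have hsum : 2 * (#|B :\: S|%:R * \sum_(x in S) p x) <=
    \sum_(x in B) \sum_(x' in B) `|p x - p x'|.
  rewrite [X in _ <= X](big_setID S) /= (setIidPr SB).
  have e2 : forall z : R, 2 * z = z + z by move=> z; ring.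
  rewrite e2; apply: lerD.
    rewrite mulr_sumr; apply: ler_sum => x hx.
    rewrite (big_setID S) /= (setIidPr SB).
    apply: le_trans (_ : \sum_(x' in B :\: S) `|p x - p x'| <= _); last first.
      by rewrite lerDr sumr_ge0.
    rewrite (eq_bigr (fun _ => p x)).
      by rewrite sumr_const mulr_natl.
    move=> x'; rewrite inE => /andP[hS' hB'].
    by rewrite (p0 x' hS' hB') subr0 ger0_norm.
  have -> : #|B :\: S|%:R * \sum_(x in S) p x = \sum_(x0 in B :\: S) \sum_(x in S) p x.
    by rewrite sumr_const mulr_natl.
  apply: ler_sum => x.
  rewrite inE => /andP[hS hB]; rewrite (p0 x hS hB).
  rewrite [X in _ <= X](big_setID S) /= (setIidPr SB).
  apply: le_trans (_ : \sum_(x' in S) `|0 - p x'| <= _); last first.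
    by rewrite lerDl sumr_ge0.
  by rewrite le_eqVlt; apply/orP; left; apply/eqP/eq_bigr => x' _; rewrite sub0r normrN ger0_norm.
have e2n : q ^+ (2*n-2) = q^+(n-1) * q^+(n-1).
  by rewrite -exprD; congr (_ ^+ _); lia.
have qpos : 0 < q ^+ (n-1).
  by rewrite exprn_gt0 // ltr0n; apply/card_gt0P; exists 0.
have Pge0 : 0 <= \sum_(x in S) p x by apply: sumr_ge0.
have hKR : (#|S|%:R : R) <= (n ^ (n * m))%:R by rewrite ler_nat.
rewrite hpy e2n.
move: qpos hsum hKR Pge0; rewrite hN natrD.
move: (\sum_(x in S) p x) (\sum_(x in B) \sum_(x' in B) `|p x - p x'|) => P Z.
move: (#|S|%:R : R) (#|B :\: S|%:R : R) ((n ^ (n * m))%:R : R) => K D M.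
move=> hpos hZ hKM hP0.
have hN0 : K + D != 0 by rewrite gt_eqF.
have -> : 2 * (1 - M / (K + D)) * (P / (K + D)) =
   (2 * ((K + D) - M) * P) * ((K + D) * (K + D))^-1 by field.
rewrite [X in _ <= X]mulrC.
apply: ler_wpM2r; first by rewrite invr_ge0 mulr_ge0 // ltW.
nra.
Qed.
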